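(* Let $G$ be a $2$-connected (finite, simple) graph with pathwidth $p$. Then every edge of $G$ is contained in a bond $F$ of $G$ such that $p \le 3|F|-2$. In particular, if $G$ has cocircumference $k$, then $\mathrm{pw}(G)\le 3k-2$.
   Context: A bond of a graph $G$ is an inclusion-wise minimal set of edges $F$ such that $G-F$ has more connected components than $G$. The cocircumference of a graph with at least one edge is the maximum size of a bond. A tree-decomposition of $G$ is a family $\{X_u : u\in V(T)\}$ of subsets of $V(G)$ indexed by the nodes of a tree $T$ such that for every $x\in V(G)$ the nodes $u$ with $x\in X_u$ induce a non-empty subtree of $T$, and every edge $xy$ of $G$ satisfies $\{x,y\}\subseteq X_u$ for some $u$; its width is $\max_u |X_u|-1$. A path-decomposition is a tree-decomposition where $T$ is a path, written as a sequence of bags $(X_0,\dots,X_s)$; the pathwidth $\mathrm{pw}(G)$ is the minimum width of a path-decomposition of $G$. *)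

(* Defs.v *)
(* A finite simple graph is a symmetric irreflexive relation
   [g : rel T] on a finite type [T]; edges are 2-element vertex sets. *)
From mathcomp Require Import all_boot.
Set Implicit Arguments. Unset Strict Implicit. Unset Printing Implicit Defensive.

Section Graphs.
Variable T : finType.

Definition simple_graph (g : rel T) : Prop := symmetric g /\ irreflexive g.

Definition edges (g : rel T) : {set {set T}} :=
  [set [set u.1; u.2] | u : T * T & g u.1 u.2].

Definition ncomp (g : rel T) : nat :=
  #|[set [set y | connect g x y] | x : T]|.

Definition del_edges (g : rel T) (F : {set {set T}}) : rel T :=
  [rel x y | g x y && ([set x; y] \notin F)].

(* G - v : delete vertex v (v becomes isolated; we only consider other vertices) *)
Definition del_vertex (g : rel T) (v : T) : rel T :=
  [rel x y | [&& g x y, x != v & y != v]].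

Definition disconnects (g : rel T) (F : {set {set T}}) : Prop :=
  ncomp g < ncomp (del_edges g F).

Definition bond (g : rel T) (F : {set {set T}}) : Prop :=
  F \subset edges g /\ disconnects g F /\
  (forall F' : {set {set T}}, F' \proper F -> ~ disconnects g F').

Definition connected (g : rel T) : Prop := forall x y : T, connect g x y.

Definition two_connected (g : rel T) : Prop :=
  2 < #|T| /\ connected g /\
  (forall v x y : T, x != v -> y != v -> connect (del_vertex g v) x y).

Definition is_cocircumference (g : rel T) (k : nat) : Prop :=
  (exists F, bond g F /\ #|F| = k) /\ (forall F, bond g F -> #|F| <= k).

Definition path_decomposition (g : rel T) (s : seq {set T}) : Prop :=
  s != [::] /\
  (forall x : T, exists2 i, i < size s & x \in nth set0 s i) /\
  (forall (x : T) (i j k : nat), i <= j -> j <= k -> k < size s ->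
     x \in nth set0 s i -> x \in nth set0 s k -> x \in nth set0 s j) /\
  (forall x y : T, g x y ->
     exists2 i, i < size s & (x \in nth set0 s i) && (y \in nth set0 s i)).

Definition pd_width (s : seq {set T}) : nat := (\max_(X <- s) #|X|).-1.

Definition is_pathwidth (g : rel T) (p : nat) : Prop :=
  (exists2 s, path_decomposition g s & pd_width s = p) /\
  (forall s, path_decomposition g s -> p <= pd_width s).

End Graphs.

(* Main.v *)
Require Import Defs.
From mathcomp Require Import all_boot zify.
Set Implicit Arguments. Unset Strict Implicit. Unset Printing Implicit Defensive.


Section Gen.
Variable T : finType.
Implicit Types (h : rel T) (A B : {set T}).

Definition restr h B : rel T := [rel u w | [&& h u w, u \in B & w \in B]].

Lemma cross h A a b : connect h a b -> a \in A -> b \notin A ->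
  exists u w, [/\ u \in A, w \notin A & h u w].
Proof.
move/connectP=> [s]; elim: s a => [|z s IH] a /=.
  by move=> _ -> ->.
move=> /andP[haz ps] eb aA bA.
case zA: (z \in A); first exact: (IH z ps eb zA bA).
by exists a, z; rewrite zA.
Qed.

Lemma conn_inv (f : T -> bool) h a b : connect h a b ->
  (forall u w, h u w -> f u = f w) -> f a = f b.
Proof.
move/connectP=> [s]; elim: s a => [|z s IH] a /=; first by move=> _ ->.
move=> /andP[haz ps] eb H; rewrite (H _ _ haz); exact: (IH z ps eb H).
Qed.

Lemma restr_in h B a z : a \in B -> connect (restr h B) a z -> z \in B.
Proof.
move=> aB c.
have H := @conn_inv (fun u => u \in B) _ _ _ c; rewrite /= in H.
by rewrite -H // => u w /and3P[_ -> ->].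
Qed.

Lemma conn_restr h B a b : (forall z, connect h a z -> z \in B) ->
  connect h a b -> connect (restr h B) a b.
Proof.
move=> H /connectP[s]; elim: s a H => [|z s IH] a /= H.
  by move=> _ ->.
move=> /andP[haz ps] eb.
have Hz : forall z', connect h z z' -> z' \in B.
  by move=> z' c; apply: H; apply: connect_trans (connect1 haz) c.
apply: connect_trans (IH z Hz ps eb).
apply: connect1; apply/and3P; split => //.
  exact: (H a (connect0 _ _)).
exact: (H z (connect1 haz)).
Qed.

Lemma conn_mono h h' a b : subrel h h' -> connect h a b -> connect h' a b.
Proof. by move=> H; apply: connect_sub => u w /H; apply: connect1. Qed.

Lemma restr_sym h B : symmetric h -> symmetric (restr h B).
Proof. by move=> sh u w; rewrite /restr /= sh; case: (u \in B); case: (w \in B); rewrite ?andbF. Qed.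

Lemma ncomp1 h : (forall a b, connect h a b) -> (exists a : T, True) -> ncomp h = 1.
Proof.
move=> H [a _]; rewrite /ncomp.
have -> : [set [set z | connect h w z] | w : T] = [set setT].
  apply/setP=> X; rewrite inE; apply/imsetP/eqP => [[w _ ->]|->].
    by apply/setP=> z; rewrite !inE H.
  by exists a => //; apply/setP=> z; rewrite !inE H.
by rewrite cards1.
Qed.
Lemma ctrans h a b c : connect h a b -> connect h b c -> connect h a c.
Proof. by move=> ab bc; apply: connect_trans ab bc. Qed.
Lemma restrI h B a b : h a b -> a \in B -> b \in B -> restr h B a b.
Proof. by move=> *; apply/and3P. Qed.
End Gen.


Section Ext.
Variable T : finType.
Variables (g : rel T) (x y : T).
Hypothesis sg : symmetric g.
Hypothesis tc : forall v a b, a != v -> b != v -> connect (del_vertex g v) a b.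

Definition cin (B : {set T}) := forall a b, a \in B -> b \in B -> connect (restr g B) a b.
Definition good (S : {set T}) := [/\ x \in S, y \notin S, cin S & cin (~: S)].

Lemma csym (B : {set T}) : connect_sym (restr g B).
Proof. exact/sym_connect_sym/restr_sym. Qed.

Lemma extend S : good S -> #|S|.+1 < #|T| ->
  exists v, [/\ v \notin S, v != y & good (v |: S)].
Proof.
move=> [xS yS cS cT] card.
set T' := ~: S.
pose hv v := restr g (T' :\ v).
pose comp v := [set z | connect (hv v) y z].
pose P v := [&& v \in T', v != y & [exists u, (u \in S) && g u v]].
have yT : y \in T' by rewrite inE.
have [v0 Pv0] : exists v0, P v0.
  have : 0 < #|T' :\ y|.
    have e2 := cardsC S; have := cardsD1 y T'; rewrite yT /= => e1.
    rewrite -/T' in e2.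
    lia.
  case/card_gt0P => z; rewrite !inE => /andP[zy zS].
  have xy : x != y by apply/eqP => exy; rewrite -exy xS in yS.
  have [u [w [uS wS]]] := cross (tc xy zy) xS zS.
  move=> /and3P[guw _ wy]; exists w; rewrite /P inE wS wy /=.
  by apply/existsP; exists u; rewrite uS.
have compsub v : v != y -> forall z, z \in comp v -> z \in T' :\ v.
  move=> vy z; rewrite inE => c; apply: restr_in c; by rewrite !inE yS eq_sym vy.
case: (arg_maxnP (fun v => #|comp v|) Pv0) => v Pv vmax.
move: (Pv) => /and3P[vT vy /existsP[u0 /andP[u0S gu0v]]].
have cT' : cin (T' :\ v).
  have allc : forall c, c \in T' :\ v -> c \in comp v.
    move=> c cTv; apply/negPn/negP => cnot.
    pose C := [set z | connect (hv v) c z].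
    have CT : forall z, z \in C -> z \in T' :\ v.
      by move=> z; rewrite inE => cz; apply: restr_in cz.
    have Cdisj : forall z, z \in C -> z \in comp v -> False.
      move=> z; rewrite !inE => cz yz; apply/negP: cnot; rewrite inE.
      by rewrite negbK; apply: (ctrans yz); rewrite csym.
    have cv : c != v by move: cTv; rewrite !inE => /andP[].
    have xv : x != v by apply/eqP => exv; move: vT; rewrite -exv inE xS.
    have cC : c \in C by rewrite inE connect0.
    have xC : x \notin C by apply/negP => /CT; rewrite !inE xS andbF.
    have [u [w [uC wC /and3P[guw uv wv]]]] := cross (tc cv xv) cC xC.
    have wS : w \in S.
      apply/negPn/negP => wnS; apply/negP: wC; rewrite negbK inE.
      move: (uC); rewrite inE => cu; apply: (ctrans cu); apply: connect1.
      by apply: restrI guw (CT u uC) _; rewrite !inE wv wnS.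
    have uTv := CT u uC.
    have ucomp : u \notin comp v by apply/negP => /(Cdisj u uC).
    have uy : u != y.
      by apply/eqP => uey; apply/negP: ucomp; rewrite uey inE connect0.
    have Pu : P u.
      move: uTv; rewrite !inE => /andP[_ uS]; rewrite /P inE uS uy /=.
      by apply/existsP; exists w; rewrite wS sg.
    have sub : forall z, z \in comp v -> z \in comp u.
      move=> z; rewrite !inE => yz.
      have H : forall z', connect (hv v) y z' -> z' \in (T' :\ v) :\ u.
        move=> z' yz'; rewrite in_setD1 (compsub v vy z') ?andbT; last by rewrite inE.
        by apply/eqP => ezu; move: ucomp; rewrite -ezu inE yz'.
      have c2 := conn_restr H yz.
      apply: conn_mono c2 => a b /and3P[/and3P[gab _ _]].
      rewrite !inE => /and3P[au av aS] /and3P[bu bv bS].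
      by apply: restrI => //; rewrite !inE ?au ?aS ?bu ?bS.
    have vcomp : v \in comp u.
      have ycv : y \in comp v by rewrite inE connect0.
      have vncv : v \notin comp v by apply/negP => /(compsub v vy); rewrite !inE eqxx.
      have [u1 [w1 [u1c w1c /and3P[g1 u1T w1T]]]] := cross (cT y v yT vT) ycv vncv.
      have w1v : w1 = v.
        apply/eqP/negPn/negP => w1v; apply/negP: w1c; rewrite negbK.
        move: (u1c); rewrite !inE => yu1; apply: (ctrans yu1); apply: connect1.
        by apply: restrI g1 (compsub v vy u1 u1c) _; rewrite !inE w1v; rewrite inE in w1T.
      subst w1.
      have u1u : u1 != u by apply/eqP => e; move: ucomp; rewrite -e u1c.
      have vu : v != u by apply/eqP => e; move: uTv; rewrite e !inE eqxx.
      move: (sub u1 u1c); rewrite !inE => yu1; apply: (ctrans yu1); apply: connect1.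
      have := compsub v vy u1 u1c; rewrite !inE => /andP[_ u1S].
      by apply: restrI g1 _ _; rewrite !inE ?u1u ?u1S ?vu; rewrite inE in vT.
    have : comp v \proper comp u.
      apply/properP; split; first by apply/subsetP => z; apply: sub.
      by exists v => //; apply/negP => /(compsub v vy); rewrite !inE eqxx.
    move/proper_card; rewrite ltnNge; move/negP; apply; exact: vmax.
  move=> a b aT bT.
  have ya := allc a aT; have yb := allc b bT; rewrite !inE in ya yb.
  by rewrite csym in ya; exact: ctrans ya yb.
exists v; split => //.
  by move: vT; rewrite inE.
split.
- by rewrite !inE xS orbT.
- by rewrite !inE negb_or eq_sym vy yS.
- have mono : forall a b, connect (restr g S) a b -> connect (restr g (v |: S)) a b.
    move=> a b c; apply: conn_mono c => a' b' /and3P[gab aS' bS'].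
    by apply: restrI; rewrite // !inE ?aS' ?bS' ?orbT.
  have tox : forall a, a \in v |: S -> connect (restr g (v |: S)) a x.
    move=> a; rewrite !inE => /orP[/eqP ->|aS].
      have e : restr g (v |: S) v u0.
        by apply: restrI; [rewrite sg | rewrite !inE eqxx | rewrite !inE u0S orbT].
      by apply: (ctrans (connect1 e)); apply: mono; apply: cS.
    by apply: mono; apply: cS.
  move=> a b aS bS; have := tox b bS; rewrite csym => xb; exact: ctrans (tox a aS) xb.
- have -> : ~: (v |: S) = T' :\ v by apply/setP => z; rewrite !inE negb_or andbC.
  exact: cT'.
Qed.
End Ext.


Section Chain.
Variable T : finType.

Lemma index_rcons_lt (s : seq T) w u i : i <= size s ->
  (index u (rcons s w) < i) = (index u s < i).
Proof.
move=> le; rewrite -cats1 index_cat; case: ifP => // us.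
by rewrite (memNindex (negbT us)) !ltnNge le (leq_trans le (leq_addr _ _)).
Qed.

Variables (g : rel T) (x y : T).
Hypothesis sg : symmetric g.
Hypothesis tc : forall v a b, a != v -> b != v -> connect (del_vertex g v) a b.
Hypothesis xy : x != y.

Lemma chain m : 0 < m -> m.+1 <= #|T| -> exists s : seq T,
  [/\ size s = m, uniq s, y \notin s &
      forall i, 0 < i <= m -> good g x y [set u | index u s < i]].
Proof.
elim: m => // [[|m]] IH _ le.
  exists [:: x]; split => //; first by rewrite inE eq_sym.
  move=> [|[|i]] // _.
  have -> : [set u | index u [:: x] < 1] = [set x].
    by apply/setP => u; rewrite !inE /=; case: eqP => [->|/eqP]; rewrite ?eqxx // eq_sym => /negbTE ->.
  split.
  - by rewrite inE.
  - by rewrite inE eq_sym.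
  - by move=> a b; rewrite !inE => /eqP -> /eqP ->; apply: connect0.
  - move=> a b; rewrite !inE => ax bx; apply: conn_mono (tc ax bx) => u w /and3P[guw ux wx].
    by apply: restrI; rewrite // !inE.
have [s [ss us ys cs]] := IH erefl (ltnW le).
set S := [set u | index u s < m.+1].
have SE : S = [set u in s] by apply/setP => u; rewrite !inE -ss index_mem.
have cardS : #|S| = m.+1 by rewrite SE cardsE; move/card_uniqP: us ->.
have gS : good g x y S by apply: cs; rewrite ltnSn.
have cd : #|S|.+1 < #|T| by rewrite cardS.
have [v [vS vy gv]] := extend sg tc gS cd.
have vs : v \notin s by move: vS; rewrite SE inE.
exists (rcons s v); split.
- by rewrite size_rcons ss.
- by rewrite rcons_uniq vs us.
- by rewrite mem_rcons inE negb_or eq_sym vy ys.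
move=> i /andP[i0 im]; case: (ltngtP i m.+2) im => // [ilt|->] _.
  have -> : [set u | index u (rcons s v) < i] = [set u | index u s < i].
    by apply/setP => u; rewrite !inE index_rcons_lt // ss.
  by apply: cs; rewrite i0 -ltnS.
have -> : [set u | index u (rcons s v) < m.+2] = v |: S.
  apply/setP => u; rewrite SE !inE -cats1 index_cat.
  case: ifP => us'.
    by rewrite orbT; apply: (@ltn_trans m.+1) => //; rewrite -ss index_mem.
  rewrite orbF ss /=; case: eqP => [->|/eqP]; first by rewrite eqxx addn0 ltnSn.
  by rewrite eq_sym => /negbTE ->; rewrite addn1 ltnn.
exact: gv.
Qed.
End Chain.


Section Bond.
Variable T : finType.
Variables (g : rel T) (x y : T).
Hypothesis sg : symmetric g.
Hypothesis gc : forall a b, connect g a b.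

Definition delta (S : {set T}) : {set {set T}} :=
  [set [set u.1; u.2] | u : T * T & [&& g u.1 u.2, u.1 \in S & u.2 \notin S]].

Lemma deltaI (S : {set T}) a b : g a b -> a \in S -> b \notin S -> [set a; b] \in delta S.
Proof. by move=> gab aS bS; apply/imsetP; exists (a, b); rewrite // inE /= gab aS. Qed.

Lemma deltaE (S : {set T}) e : e \in delta S ->
  exists a b, [/\ e = [set a; b], g a b, a \in S & b \notin S].
Proof. by case/imsetP => [[a b]]; rewrite inE /= => /and3P[gab aS bS] ->; exists a, b. Qed.

Lemma delta_same (S : {set T}) a b : (a \in S) = (b \in S) -> [set a; b] \notin delta S.
Proof.
move=> e; apply/negP => /deltaE [c [d [E _ cS dS]]].
have : d \in [set a; b] by rewrite E !inE eqxx orbT.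
have : c \in [set a; b] by rewrite E !inE eqxx.
rewrite !inE => /orP[/eqP ec|/eqP ec] /orP[/eqP ed|/eqP ed]; subst c d.
all: by move: e cS dS; case: (a \in S); case: (b \in S).
Qed.

Lemma delta_sub (S : {set T}) : delta S \subset edges g.
Proof.
apply/subsetP => e /deltaE [a [b [-> gab _ _]]].
by apply/imsetP; exists (a, b); rewrite // inE.
Qed.

Lemma del_sym (F : {set {set T}}) : symmetric (del_edges g F).
Proof. by move=> a b; rewrite /del_edges /= sg setUC. Qed.

Lemma ncomp_g : ncomp g = 1.
Proof. by apply: ncomp1 => //; exists x. Qed.

Lemma delta_bond (S : {set T}) : good g x y S -> bond g (delta S).
Proof.
move=> [xS yS cS cT]; split; first exact: delta_sub.
split.
  rewrite /disconnects ncomp_g; apply/card_gt1P.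
  exists [set z | connect (del_edges g (delta S)) x z].
  exists [set z | connect (del_edges g (delta S)) y z].
  split; try by apply/imsetP; eexists.
  apply/negP => /eqP E.
  have : y \in [set z | connect (del_edges g (delta S)) y z] by rewrite inE connect0.
  rewrite -E inE => c.
  have := @conn_inv _ (fun u => u \in S) _ _ _ c; rewrite /= xS.
  move=> H; move: yS; rewrite -H // => u w /andP[guw nd].
  apply/eqP/negP => ne; apply/negP: nd; rewrite negbK.
  case uS: (u \in S); move: ne; rewrite uS => ne.
    by apply: deltaI => //; case: (w \in S) ne.
  rewrite setUC; apply: deltaI; [by rewrite sg | by case: (w \in S) ne | by rewrite uS].
move=> F' /properP [sub [e eD eF]] dis.
have [a [b [Ee gab aS bS]]] := deltaE eD.
have monoH : forall B : {set T}, (forall u w, u \in B -> w \in B -> (u \in S) = (w \in S)) ->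
    forall c d, connect (restr g B) c d -> connect (del_edges g F') c d.
  move=> B HB c d; apply: conn_mono => u w /and3P[guw uB wB].
  rewrite /del_edges /= guw /=; apply/negP => /(subsetP sub); apply/negP.
  exact/delta_same/HB.
have toa : forall z, connect (del_edges g F') z a.
  move=> z; case zS: (z \in S).
    apply: (monoH S) (cS z a zS aS) => u w -> ->.
    by [].
  have zT : z \in ~: S by rewrite inE zS.
  have bT : b \in ~: S by rewrite inE.
  apply: (ctrans (monoH (~: S) _ _ _ (cT z b zT bT))).
    by move=> u w; rewrite !inE => /negbTE -> /negbTE ->.
  apply: connect1; rewrite /del_edges /= sg gab /= setUC -Ee.
  exact: eF.
have : ncomp (del_edges g F') = 1.
  apply: ncomp1; last by exists x.
  move=> c d; have := toa d; have := toa c => cd da.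
  by apply: (ctrans cd); rewrite (sym_connect_sym (del_sym F')).
by move=> e1; move: dis; rewrite /disconnects ncomp_g e1.
Qed.
End Bond.


Section PD.
Variable T : finType.
Variables (g : rel T) (ord : seq T).
Hypothesis sg : symmetric g.
Hypothesis ig : irreflexive g.
Hypothesis ou : uniq ord.
Hypothesis oa : forall u, u \in ord.

Definition pos u := index u ord.
Definition Xb i := [set u | (pos u <= i) && [exists w, (i <= pos w) && ((w == u) || g u w)]].
Definition Sp i := [set u | pos u < i].
Definition sq := [seq Xb i | i <- iota 0 (size ord)].

Lemma pos_lt u : pos u < size ord.
Proof. by rewrite /pos index_mem. Qed.

Lemma nth_sq i : i < size ord -> nth set0 sq i = Xb i.
Proof. by move=> lt; rewrite /sq (nth_map 0) ?size_iota // nth_iota. Qed.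

Lemma size_sq : size sq = size ord.
Proof. by rewrite /sq size_map size_iota. Qed.

Lemma inXb u i : pos u = i -> u \in Xb i.
Proof.
move=> <-; rewrite inE leqnn /=; apply/existsP; exists u; by rewrite leqnn eqxx.
Qed.

Lemma pd_ok (x0 : T) : path_decomposition g sq.
Proof.
split; [|split; [|split]].
- have := oa x0; rewrite /sq; case: ord => //.
- move=> u; exists (pos u); first by rewrite size_sq pos_lt.
  by rewrite nth_sq ?pos_lt // inXb.
- move=> u i j k ij jk; rewrite size_sq => kn.
  have jn : j < size ord by apply: leq_ltn_trans jk kn.
  have in_ : i < size ord by apply: leq_ltn_trans ij jn.
  rewrite !nth_sq // !inE => /andP[ui _] /andP[_ /existsP[w /andP[kw uw]]].
  rewrite (leq_trans ui ij) /=; apply/existsP; exists w.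
  by rewrite (leq_trans jk kw).
- move=> a b gab.
  case: (leqP (pos a) (pos b)) => ab.
    exists (pos b); first by rewrite size_sq pos_lt.
    rewrite nth_sq ?pos_lt // (inXb (erefl (pos b))) andbT inE ab /=.
    by apply/existsP; exists b; rewrite leqnn gab orbT.
  exists (pos a); first by rewrite size_sq pos_lt.
  rewrite nth_sq ?pos_lt // (inXb (erefl (pos a))) /= inE (ltnW ab) /=.
  by apply/existsP; exists a; rewrite leqnn sg gab orbT.
Qed.

Lemma pos_inj u w : pos u = pos w -> u = w.
Proof.
move=> e; rewrite -(nth_index u (oa u)) -(nth_index u (oa w)).
by rewrite -/(pos u) -/(pos w) e.
Qed.

Lemma Xb0 : #|Xb 0| <= 1.
Proof.
apply/card_le1P => u; rewrite inE leqn0 => /andP[/eqP u0 _] w.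
rewrite !inE leqn0; apply/idP/idP => [/andP[/eqP w0 _]|/eqP ->].
  by apply/eqP/pos_inj; rewrite w0 u0.
by rewrite u0 eqxx /=; apply/existsP; exists u; rewrite eqxx.
Qed.

Lemma Xb_card (x0 : T) i : 0 < i < size ord -> #|Xb i| <= (#|delta g (Sp i)|).+1.
Proof.
move=> /andP[i0 il].
set v := nth x0 ord i.
have pv : pos v = i by rewrite /pos index_uniq.
set L := Xb i :\ v.
have cL := cardsD1 v (Xb i).
have key : forall u, u \in L -> pos u < i /\ exists w, i <= pos w /\ g u w.
  move=> u; rewrite !inE => /andP[uv /andP[ui /existsP[w /andP[iw wu]]]].
  have ui' : pos u < i.
    rewrite ltn_neqAle ui andbT; apply/eqP => e.
    by move/eqP: uv; apply; apply: pos_inj; rewrite e pv.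
  split => //; exists w; split => //.
  case/orP: wu => // /eqP ewu; move: ui'; rewrite -ewu ltnNge iw.
  by [].
pose f u := [set u; odflt u [pick w | (i <= pos w) && g u w]].
have fu : forall u, u \in L -> exists w, [/\ f u = [set u; w], i <= pos w & g u w].
  move=> u uL; rewrite /f; case: pickP => [w /andP[iw guw]|none].
    by exists w.
  have [_ [w [iw guw]]] := key u uL.
  by have := none w; rewrite iw guw.
have inj : {in L &, injective f}.
  move=> u1 u2 u1L u2L e.
  have [w1 [e1 _ _]] := fu u1 u1L.
  have [w2 [e2 iw2 _]] := fu u2 u2L.
  have : u1 \in f u2 by rewrite -e e1 !inE eqxx.
  rewrite e2 !inE => /orP[/eqP //|/eqP ew].
  have [pu1 _] := key u1 u1L.
  by move: pu1; rewrite ew ltnNge iw2.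
have sub : f @: L \subset delta g (Sp i).
  apply/subsetP => e /imsetP[u uL ->].
  have [w [-> iw guw]] := fu u uL.
  have [pu _] := key u uL.
  by apply: deltaI; rewrite // inE ?pu // -leqNgt.
have := subset_leq_card sub; rewrite card_in_imset //.
move: cL; case: (v \in Xb i) => /= e; rewrite e; [rewrite add1n ltnS | rewrite add0n => H; apply: (leq_trans H)] => //.
Qed.

Lemma width (x0 : T) K : (forall i, 0 < i < size ord -> #|delta g (Sp i)| <= K) ->
  pd_width sq <= K.
Proof.
move=> H; rewrite /pd_width.
suff : \max_(X <- sq) #|X| <= K.+1 by lia.
apply/bigmax_leqP_seq => X /mapP[i]; rewrite mem_iota add0n => /andP[_ il] -> _.
case: i il => [|i] il.
  by apply: leq_trans Xb0 _.
apply: leq_trans (Xb_card x0 _) _; first by rewrite il.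
by rewrite ltnS; apply: H; rewrite il.
Qed.
End PD.

Unset Implicit Arguments. Set Strict Implicit.

Theorem theorem1p4 (T : finType) (g : rel T) (p : nat) :
  simple_graph g -> two_connected g -> is_pathwidth g p ->
  (forall x y : T, g x y ->
     exists F : {set {set T}}, [/\ bond g F, [set x; y] \in F & p <= 3 * #|F| - 2])
  /\ (forall k : nat, is_cocircumference g k -> p <= 3 * k - 2).
Proof.
move=> [sg ig] [T3 [gc tc]] [_ pwmin].
have part1 : forall x y : T, g x y ->
     exists F : {set {set T}}, [/\ bond g F, [set x; y] \in F & p <= 3 * #|F| - 2].
  move=> x y gxy.
  have xy : x != y by apply/eqP => exy; move: gxy; rewrite exy ig.
  have m0 : 0 < #|T|.-1 by lia.
  have m1 : (#|T|.-1).+1 <= #|T| by lia.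
  have [s [ss us ys cs]] := chain sg tc xy m0 m1.
  set ord := rcons s y.
  have ou : uniq ord by rewrite rcons_uniq ys us.
  have so : size ord = #|T| by rewrite size_rcons ss; lia.
  have oa : forall u, u \in ord.
    have e : #|ord| = #|T| by move/card_uniqP: ou ->.
    move=> u; have := subset_cardP e (subset_predT _); move=> H.
    by rewrite H.
  have SpE : forall i, 0 < i < #|T| -> good g x y (Sp ord i).
    move=> i /andP[i0 il].
    have -> : Sp ord i = [set u | index u s < i].
      by apply/setP => u; rewrite !inE /pos index_rcons_lt // ss; lia.
    by apply: cs; rewrite i0 /= -ltnS (ltn_predK il).
  have n1 : 1 < #|T| by lia.
  pose i0 := Ordinal n1.
  pose P := fun i : 'I_#|T| => 0 < (i : nat).
  pose Fi := fun i : 'I_#|T| => #|delta g (Sp ord i)|.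
  have Pi0 : P i0 by [].
  case: (arg_maxnP Fi Pi0) => im Pim imax.
  have gim : good g x y (Sp ord im) by apply: SpE; rewrite ltn_ord andbT; exact: Pim.
  exists (delta g (Sp ord im)).
  have xyF : [set x; y] \in delta g (Sp ord im).
    by case: gim => xS yS _ _; apply: deltaI.
  split => //; first exact: delta_bond sg gc _ gim.
  have pw : p <= #|delta g (Sp ord im)|.
    apply: leq_trans (pwmin _ (pd_ok sg oa x)) _.
    apply: (width ou oa x) => i /andP[i0' il].
    rewrite so in il.
    exact: (imax (Ordinal il)).
  have : 0 < #|delta g (Sp ord im)| by apply/card_gt0P; exists [set x; y].
  lia.
split => // k [[F0 [bF0 cF0]] kmax].
have [a [b [_ _ ab]]] : exists a b, [/\ a \in [set: T], b \in [set: T] & a != b].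
  by apply/card_gt1P; rewrite cardsT; lia.
have aA : a \in [set a] by rewrite inE.
have bA : b \notin [set a] by rewrite inE eq_sym.
have [u [w [_ _ guw]]] := cross (gc a b) aA bA.
have [F [bF _ pF]] := part1 u w guw.
have := kmax F bF; lia.
Qed.
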